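(* Let $r\in[0,1]$ and $n\in\mathbb{N}$. If $\omega=(\omega_1,\dots,\omega_n)$ and $\nu=(\nu_1,\dots,\nu_n)$ are distinct elements of $\{0,1\}^n$ with $[\omega]_r\cap[\nu]_r\neq\emptyset$, then there is a unique $i\in\{1,\dots,n\}$ with $\omega_i\neq\nu_i$, and $\omega_j=\nu_j$ for all $j\neq i$.
   Context: For $r\in[0,1]$, $f_{r,0}(x)=\frac{x}{2-r+rx}$ and $f_{r,1}(x)=\frac{1+(1-r)(1-x)}{2-r+rx}$ are the inverse branches of the map $T_r:[0,1]\to[0,1]$, $T_r(x)=\frac{(2-r)x}{1-rx}$ ($x\le1/2$), $T_r(x)=\frac{(2-r)(1-x)}{1-r+rx}$ ($x>1/2$). For $\varphi=(\varphi_1,\dots,\varphi_n)\in\{0,1\}^n$, $f_{r,\varphi}=f_{r,\varphi_1}\circ\cdots\circ f_{r,\varphi_n}$ and the cylinder set is $[\varphi]_r=f_{r,\varphi}([0,1])$. *)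

(* Defs.v *)
From Stdlib Require Import Reals List.
Open Scope R_scope.

(* Inverse branches of T_r. *)
Definition f0 (r x : R) : R := x / (2 - r + r * x).
Definition f1 (r x : R) : R := (1 + (1 - r) * (1 - x)) / (2 - r + r * x).

(* f_{r,b} for a digit b : bool (false = 0, true = 1). *)
Definition fdig (r : R) (b : bool) (x : R) : R := if b then f1 r x else f0 r x.

(* f_{r,phi} = f_{r,phi_1} o ... o f_{r,phi_n}; a word is a list of digits,
   its head being phi_1. *)
Definition fword (r : R) (phi : list bool) (x : R) : R :=
  fold_right (fun b acc => fdig r b acc) x phi.

Definition cylinder (r : R) (phi : list bool) (y : R) : Prop :=
  exists x, 0 <= x <= 1 /\ y = fword r phi x.

(* Main.v *)
Require Import Defs.
From Stdlib Require Import Reals List Lra Psatz Bool.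
Open Scope R_scope.

Lemma div_le (a c D : R) : 0 < D -> a <= c*D -> a/D <= c.
Proof. intros HD H. unfold Rdiv. apply Rmult_le_reg_r with D; [lra|].
rewrite Rmult_assoc, Rinv_l by lra. lra. Qed.

Lemma div_ge (a c D : R) : 0 < D -> c*D <= a -> c <= a/D.
Proof. intros HD H. unfold Rdiv. apply Rmult_le_reg_r with D; [lra|].
rewrite Rmult_assoc, Rinv_l by lra. lra. Qed.

Lemma div_eq (a c D : R) : 0 < D -> a/D = c -> a = c*D.
Proof. intros HD H. rewrite <- H. field. lra. Qed.

Lemma den_pos r z : 0<=r<=1 -> 0<=z<=1 -> 0 < 2 - r + r*z.
Proof. intros; nra. Qed.

Lemma f0_b r z : 0<=r<=1 -> 0<=z<=1 -> 0 <= f0 r z <= 1/2.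
Proof. intros Hr Hz. pose proof (den_pos r z Hr Hz). unfold f0. split.
- apply div_ge; nra.
- apply div_le; nra. Qed.

Lemma f1_b r z : 0<=r<=1 -> 0<=z<=1 -> 1/2 <= f1 r z <= 1.
Proof. intros Hr Hz. pose proof (den_pos r z Hr Hz). unfold f1. split.
- apply div_ge; nra.
- apply div_le; nra. Qed.

Lemma fword_b r w x : 0<=r<=1 -> 0<=x<=1 -> 0 <= fword r w x <= 1.
Proof. intros Hr Hx. induction w as [|b t IH]; simpl; [lra|].
unfold fdig; destruct b.
- pose proof (f1_b r _ Hr IH); lra.
- pose proof (f0_b r _ Hr IH); lra. Qed.

Lemma f0_0 r z : 0<=r<=1 -> 0<=z<=1 -> f0 r z = 0 -> z = 0.
Proof. intros Hr Hz H. pose proof (den_pos r z Hr Hz). unfold f0 in H.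
apply div_eq in H; nra. Qed.

Lemma f1_1 r z : 0<=r<=1 -> 0<=z<=1 -> f1 r z = 1 -> z = 0.
Proof. intros Hr Hz H. pose proof (den_pos r z Hr Hz). unfold f1 in H.
apply div_eq in H; nra. Qed.

Lemma f0_h r z : 0<=r<=1 -> 0<=z<=1 -> f0 r z = 1/2 -> z = 1.
Proof. intros Hr Hz H. pose proof (den_pos r z Hr Hz). unfold f0 in H.
apply div_eq in H; nra. Qed.

Lemma f1_h r z : 0<=r<=1 -> 0<=z<=1 -> f1 r z = 1/2 -> z = 1.
Proof. intros Hr Hz H. pose proof (den_pos r z Hr Hz). unfold f1 in H.
apply div_eq in H; nra. Qed.

Lemma fdig_inj r b z z' : 0<=r<=1 -> 0<=z<=1 -> 0<=z'<=1 ->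
  fdig r b z = fdig r b z' -> z = z'.
Proof. intros Hr Hz Hz' H. pose proof (den_pos r z Hr Hz).
pose proof (den_pos r z' Hr Hz'). unfold fdig, f0, f1 in H. destruct b.
- assert (E : (1 + (1 - r) * (1 - z)) * (2 - r + r * z') =
              (1 + (1 - r) * (1 - z')) * (2 - r + r * z)).
  { apply Rmult_eq_reg_r with (/ (2 - r + r*z) * / (2 - r + r*z')).
    2: { apply Rmult_integral_contrapositive; split; apply Rinv_neq_0_compat; lra. }
    transitivity ((1 + (1 - r) * (1 - z)) / (2 - r + r * z)); [field; lra|].
    rewrite H. field; lra. }
  nra.
- assert (E : z * (2 - r + r * z') = z' * (2 - r + r * z)).
  { apply Rmult_eq_reg_r with (/ (2 - r + r*z) * / (2 - r + r*z')).
    2: { apply Rmult_integral_contrapositive; split; apply Rinv_neq_0_compat; lra. }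
    transitivity (z / (2 - r + r * z)); [field; lra|].
    rewrite H. field; lra. }
  nra. Qed.

Lemma L r w : 0<=r<=1 -> forall w' x x', length w = length w' ->
  0<=x<=1 -> 0<=x'<=1 -> fword r w x = fword r w' x' ->
  (fword r w x = 0 \/ fword r w x = 1) -> w = w'.
Proof. intros Hr. induction w as [|b t IH]; intros w' x x' Hl Hx Hx' He Hv;
destruct w' as [|b' t']; simpl in Hl; try discriminate; auto.
simpl in He, Hv. pose proof (fword_b r t x Hr Hx) as Bz.
pose proof (fword_b r t' x' Hr Hx') as Bz'.
pose proof (f0_b r _ Hr Bz). pose proof (f1_b r _ Hr Bz).
pose proof (f0_b r _ Hr Bz'). pose proof (f1_b r _ Hr Bz').
unfold fdig in *. destruct b, b'; destruct Hv as [Hv|Hv]; try lra.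
- f_equal. apply (IH t' x x'); auto; try lia.
  + rewrite (f1_1 r _ Hr Bz Hv). rewrite He in Hv. rewrite (f1_1 r _ Hr Bz' Hv). auto.
  + left. apply (f1_1 r); auto.
- f_equal. apply (IH t' x x'); auto; try lia.
  + rewrite (f0_0 r _ Hr Bz Hv). rewrite He in Hv. rewrite (f0_0 r _ Hr Bz' Hv). auto.
  + left. apply (f0_0 r); auto.
Qed.

Lemma M r : 0<=r<=1 -> forall om nu, length om = length nu -> om <> nu ->
  (exists y, cylinder r om y /\ cylinder r nu y) ->
  exists i, (i < length om)%nat /\
    forall j, (nth j om false <> nth j nu false <-> j = i).
Proof. intros Hr om. induction om as [|b t IH]; intros nu Hl Hne Hy;
destruct nu as [|b' t']; simpl in Hl; try discriminate; [congruence|].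
injection Hl as Hl.
destruct Hy as [y [[x [Hx Ex]] [x' [Hx' Ex']]]]. simpl in Ex, Ex'.
pose proof (fword_b r t x Hr Hx) as Bz.
pose proof (fword_b r t' x' Hr Hx') as Bz'.
destruct (bool_dec b b') as [Hb|Hb].
- subst b'. assert (Ht : t <> t') by congruence.
  assert (Hz : fword r t x = fword r t' x').
  { apply (fdig_inj r b); auto. congruence. }
  destruct (IH t' Hl Ht) as [i [Hi Hj]].
  { exists (fword r t x). split; [exists x|exists x']; auto. }
  exists (S i). simpl. split; [lia|]. intros [|j]; simpl.
  + split; [congruence| discriminate].
  + rewrite Hj. lia.
- assert (Ht : t = t').
  { pose proof (f0_b r _ Hr Bz). pose proof (f1_b r _ Hr Bz).
    pose proof (f0_b r _ Hr Bz'). pose proof (f1_b r _ Hr Bz').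
    unfold fdig in *.
    destruct b, b'; try congruence.
    + assert (A : f1 r (fword r t x) = 1/2) by lra.
      assert (A' : f0 r (fword r t' x') = 1/2) by lra.
      apply f1_h in A; auto. apply f0_h in A'; auto.
      apply (L r t Hr t' x x'); auto; lra.
    + assert (A : f0 r (fword r t x) = 1/2) by lra.
      assert (A' : f1 r (fword r t' x') = 1/2) by lra.
      apply f0_h in A; auto. apply f1_h in A'; auto.
      apply (L r t Hr t' x x'); auto; lra. }
  subst t'. exists 0%nat. simpl. split; [lia|]. intros [|j]; simpl.
  + tauto.
  + split; [tauto| discriminate].
Qed.

Theorem lemma4p1 (r : R) (n : nat) (omega nu : list bool) :
  0 <= r <= 1 ->
  length omega = n -> length nu = n ->
  omega <> nu ->
  (exists y, cylinder r omega y /\ cylinder r nu y) ->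
  exists i, (i < n)%nat /\
    (forall k, (k < n)%nat -> nth k omega false <> nth k nu false -> k = i) /\
    nth i omega false <> nth i nu false /\
    (forall j, (j < n)%nat -> j <> i -> nth j omega false = nth j nu false).
Proof.
  intros Hr Ho Hn Hne Hy.
  destruct (M r Hr omega nu ltac:(congruence) Hne Hy) as [i [Hi Hj]].
  exists i. split; [lia|]. split; [intros k _ Hk; apply Hj; auto|].
  split; [apply Hj; auto|].
  intros j _ Hji. destruct (bool_dec (nth j omega false) (nth j nu false)); auto.
  exfalso. apply Hji. apply Hj. auto.
Qed.
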